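(* Let $V$ ($|V|>1$) index a discrete memoryless multiple source with entropy function $H$, and let $R_{\mathrm{CO}}$, $\hat f_{R_{\mathrm{CO}}}$, the fundamental partition $\mathcal{P}^*$ (with $|\mathcal{P}^*|\ge 2$), the core $\mathscr{R}^*_{\mathrm{CO}}(V)$ and the subgame cores $\mathscr{R}^*_{\mathrm{CO}}(C)$, $C\in\mathcal{P}^*$, be as in the context. Let $w_V\in\mathbb{R}_{>0}^{|V|}$, $K=|\mathcal{P}^*|-1$ and $\mathbb{Q}_K=\{z/K:z\in\mathbb{Z}\}$. Let $r^E_V$ be either (a) the egalitarian solution, i.e. the minimizer of $\min\{\sum_{i\in V}r_i^2/w_i: r_V\in\mathscr{R}^*_{\mathrm{CO}}(V)\}$, or (b) the fractional egalitarian solution, i.e. the minimizer of $\min\{\sum_{i\in V}r_i^2/w_i: r_V\in\mathscr{R}^*_{\mathrm{CO}}(V)\cap\mathbb{Q}_K^{|V|}\}$. Then $$r^E_V=\bigoplus_{C\in\mathcal{P}^*} r^E_C,$$ where, for each $C\in\mathcal{P}^*$, $r^E_C$ is, in case (a), the minimizer of $\min\{\sum_{i\in C}r_i^2/w_i: r_C\in\mathscr{R}^*_{\mathrm{CO}}(C)\}$ and, in case (b), the minimizer of $\min\{\sum_{i\in C}r_i^2/w_i: r_C\in\mathscr{R}^*_{\mathrm{CO}}(C)\cap\mathbb{Q}_K^{|C|}\}$ (the egalitarian, respectively fractional egalitarian, solution of the subgame on $C$).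
   Context: Write $r(X)=\sum_{i\in X}r_i$ and $H(X\mid Y)=H(X\cup Y)-H(Y)$, where $H(X)$ is the entropy of $(Z_i:i\in X)$. The achievable region is $\mathscr{R}(V)=\{r_V\in\mathbb{R}^{|V|}: r(X)\ge H(X\mid V\setminus X)\ \forall X\subsetneq V\}$ and $R_{\mathrm{CO}}=\min\{r(V):r_V\in\mathscr{R}(V)\}$. For $\alpha\in\mathbb{R}$, $f_\alpha(\emptyset)=0$, $f_\alpha(X)=\alpha-H(V\setminus X\mid X)$ for $X\ne\emptyset$, and the Dilworth truncation is $\hat f_\alpha(X)=\min_{\mathcal{P}\in\Pi(X)}\sum_{C\in\mathcal{P}}f_\alpha(C)$ with $\Pi(X)$ the set of partitions of $X$. The fundamental partition $\mathcal{P}^*$ is the finest partition of $V$ attaining $\hat f_{R_{\mathrm{CO}}}(V)$. The core is $\mathscr{R}^*_{\mathrm{CO}}(V)=\{r_V\in\mathscr{R}(V): r(V)=R_{\mathrm{CO}}\}$, and for $C\subseteq V$, $\mathscr{R}^*_{\mathrm{CO}}(C)=\{r_C\in\mathbb{R}^{|C|}: r(X)\le\hat f_{R_{\mathrm{CO}}}(X)\ \forall X\subseteq C,\ r(C)=\hat f_{R_{\mathrm{CO}}}(C)\}$. The direct sum $\bigoplus_{C}r_C$ over a partition is the vector on $V$ whose $C$-coordinates are those of $r_C$. *)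

(* Defs.v *)
From HB Require Import structures.
From mathcomp Require Import all_boot all_order all_algebra.
From mathcomp Require Import reals exp.
Set Implicit Arguments. Unset Strict Implicit. Unset Printing Implicit Defensive.
Import Order.TTheory GRing.Theory Num.Theory.
Local Open Scope ring_scope.

Section Defs.
Context {R : realType} {V : finType} {A : V -> finType}.

(* joint pmf of the multiple source (Z_i : i in V), Z_i taking values in A i *)
Definition is_pmf (P : {dffun forall i : V, A i} -> R) :=
  (forall z, 0 <= P z) /\ \sum_z P z = 1.

(* H(X) = entropy of (Z_i : i in X), written as -sum_z P(z) ln P_X(z_X),
   where P_X(z_X) = sum of P(z') over z' agreeing with z on X (the marginal). *)
Definition entropy (P : {dffun forall i : V, A i} -> R) (X : {set V}) : R :=
  - \sum_(z : {dffun forall i : V, A i}) P z * ln (\sum_(z' : {dffun forall i : V, A i} | [forall i in X, z' i == z i]) P z').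
End Defs.

Section Defs2.
Context {R : realType} {V : finType}.
Implicit Types (H : {set V} -> R) (r w : V -> R) (X Y C : {set V}).

Definition condH H X Y := H (X :|: Y) - H Y.

Definition rsum r X := \sum_(i in X) r i.

Definition achievable H r :=
  forall X, X \proper [set: V] -> condH H X (~: X) <= rsum r X.

Definition is_RCO H (a : R) :=
  (exists r, achievable H r /\ rsum r [set: V] = a) /\
  (forall r, achievable H r -> a <= rsum r [set: V]).

Definition falpha H (a : R) X : R :=
  if X == set0 then 0 else a - condH H (~: X) X.

(* Dilworth truncation: min over partitions of X (the initial value
   falpha X is the value of the trivial partition, or 0 = value of the
   empty partition of the empty set, so it is attained). *)
Definition fhat H (a : R) X : R :=
  \big[Num.min/falpha H a X]_(P : {set {set V}} | partition P X)
     \sum_(C in P) falpha H a C.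

Definition refines (P Q : {set {set V}}) :=
  forall C, C \in P -> exists2 D, D \in Q & C \subset D.

Definition fundamental_partition H (a : R) (Pst : {set {set V}}) :=
  [/\ partition Pst [set: V],
      \sum_(C in Pst) falpha H a C = fhat H a [set: V] &
      forall Q : {set {set V}}, partition Q [set: V] ->
        \sum_(C in Q) falpha H a C = fhat H a [set: V] -> refines Pst Q].

Definition core H (a : R) r := achievable H r /\ rsum r [set: V] = a.

(* the subgame core R*_CO(C); only the coordinates of r in C matter *)
Definition subcore H (a : R) C r :=
  (forall X, X \subset C -> rsum r X <= fhat H a X) /\ rsum r C = fhat H a C.

Definition inQK (K : nat) (x : R) := exists z : int, x = z%:~R / K%:R.

Definition wnorm w C r := \sum_(i in C) r i ^+ 2 / w i.

Definition is_minimizer (feas : (V -> R) -> Prop) (obj : (V -> R) -> R) r :=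
  feas r /\ forall r', feas r' -> obj r <= obj r'.
End Defs2.

(* Main.v *)
Require Import Defs.
From HB Require Import structures.
From mathcomp Require Import all_boot all_order all_algebra.
From mathcomp Require Import reals exp.
From mathcomp Require Import ring lra.
Import Order.TTheory GRing.Theory Num.Theory.
Local Open Scope ring_scope.
Set Implicit Arguments. Unset Strict Implicit. Unset Printing Implicit Defensive.

Lemma ln_le_sub1 (R : realType) (x : R) : 0 < x -> ln x <= x - 1.
Proof.
move=> x0; have := expR_ge1Dx (ln x); rewrite lnK ?posrE //.
by rewrite lerBrDl.
Qed.

Section Ent.
Variables (R : realType) (V : finType) (A : V -> finType).
Variable (P : {dffun forall i : V, A i} -> R).
Hypothesis P0 : forall z, 0 <= P z.
Hypothesis P1 : \sum_z P z = 1.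
Local Notation T := {dffun forall i : V, A i}.

Definition sim (S : {set V}) (z' z : T) := [forall i in S, z' i == z i].
Definition mg S z := \sum_(z' | sim S z' z) P z'.

Lemma simP (S : {set V}) (z' z : T) : reflect (forall i, i \in S -> z' i = z i) (sim S z' z).
Proof.
apply: (iffP forall_inP) => H i /H; first by move/eqP.
by move=> ->.
Qed.

Lemma sim_refl (S : {set V}) (z : T) : sim S z z.
Proof. by apply/simP. Qed.
Lemma sim_sym (S : {set V}) (z z' : T) : sim S z z' -> sim S z' z.
Proof. by move/simP=> H; apply/simP=> i /H ->. Qed.
Lemma sim_trans (S : {set V}) (z1 z2 z3 : T) : sim S z1 z2 -> sim S z2 z3 -> sim S z1 z3.
Proof. by move/simP=> H1 /simP H2; apply/simP=> i iS; rewrite H1 // H2. Qed.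
Lemma sim_sub (S S' : {set V}) (z z' : T) : S \subset S' -> sim S' z z' -> sim S z z'.
Proof. by move/subsetP=> sS /simP H; apply/simP=> i /sS /H. Qed.

Lemma mg_ge (S : {set V}) (z : T) : P z <= mg S z.
Proof.
rewrite /mg (bigD1 z) ?sim_refl //= lerDl.
by apply: sumr_ge0 => i _.
Qed.

Lemma mg_class (S : {set V}) (z z0 : T) : sim S z z0 -> mg S z = mg S z0.
Proof.
move=> h; apply: eq_bigl => z'; apply/idP/idP => hz.
  exact: sim_trans hz h.
exact: sim_trans hz (sim_sym h).
Qed.

Lemma mg_ge0 (S : {set V}) (z : T) : 0 <= mg S z.
Proof. exact: le_trans (P0 z) (mg_ge S z). Qed.

Lemma entropy_submod (X Y : {set V}) :
  entropy P (X :|: Y) + entropy P (X :&: Y) <= entropy P X + entropy P Y.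
Proof.
set U := X :|: Y; set I := X :&: Y.
pose Q z := P z * (mg X z * mg Y z) / (mg U z * mg I z).
have step1 z : P z * (ln (mg X z) + ln (mg Y z) - ln (mg U z) - ln (mg I z))
    <= Q z - P z.
  have [Pz0|Pzn0] := eqVneq (P z) 0.
    by rewrite /Q Pz0 !mul0r subr0.
  have Pz : 0 < P z by rewrite lt_def Pzn0 P0.
  have mp S : 0 < mg S z by exact: lt_le_trans Pz (mg_ge S z).
  have -> : ln (mg X z) + ln (mg Y z) - ln (mg U z) - ln (mg I z)
      = ln (mg X z * mg Y z / (mg U z * mg I z)).
    rewrite ln_div ?posrE ?mulr_gt0 //.
    by rewrite !lnM ?posrE // opprD addrA.
  rewrite /Q -[P z * _ / _]mulrA.
  have -> : forall r, P z * r - P z = P z * (r - 1) by move=> r; rewrite mulrBr mulr1.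
  idtac.
  rewrite ler_wpM2l ?P0 //; apply: ln_le_sub1.
  by rewrite !(mulr_gt0, invr_gt0).
have step2 : \sum_z Q z <= 1.
  have eQ z : Q z = \sum_u \sum_v (if sim X u z && sim Y v z then
                   P u * P v * (P z / (mg U z * mg I z)) else 0).
    have -> : Q z = mg X z * mg Y z * (P z / (mg U z * mg I z)) by rewrite /Q; ring.
    set d := P z / _.
    rewrite /(mg X z) big_mkcond /= !big_distrl /=.
    apply: eq_bigr => u _; rewrite /(mg Y z) big_mkcond /= big_distrr big_distrl /=.
    apply: eq_bigr => v _.
    by case: (sim X u z); case: (sim Y v z); rewrite /= ?(mul0r, mulr0).
  rewrite (eq_bigr _ (fun z _ => eQ z)) exchange_big /=.
  apply: (@le_trans _ _ (\sum_u \sum_v (if sim I v u then P u * P v / mg I u else 0))).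
    apply: ler_sum => u _; rewrite exchange_big /=; apply: ler_sum => v _.
    case: (pickP (fun z => sim X u z && sim Y v z)) => [z0 /andP[hu hv]|hn].
      have svu : sim I v u.
        apply/simP => i; rewrite inE => /andP[iX iY].
        by rewrite (simP _ _ _ hv i iY) (simP _ _ _ hu i iX).
      rewrite svu.
      have -> : \sum_z (if sim X u z && sim Y v z then
                   P u * P v * (P z / (mg U z * mg I z)) else 0)
             = P u * P v * (\sum_(z | sim U z z0) P z / (mg U z0 * mg I u)).
        rewrite big_distrr /= [RHS]big_mkcond /=; apply: eq_bigr => z _.
        have -> : (sim X u z && sim Y v z) = sim U z z0.
          apply/idP/idP.
            move=> /andP[/simP h1 /simP h2]; apply/simP => i; rewrite inE => /orP[iX|iY].
              by rewrite -h1 // (simP _ _ _ hu i iX).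
            by rewrite -h2 // (simP _ _ _ hv i iY).
          move/simP=> h; apply/andP; split; apply/simP => i iS.
            by rewrite (simP _ _ _ hu i iS) h // inE iS.
          by rewrite (simP _ _ _ hv i iS) h // inE iS orbT.
        case hz: (sim U z z0) => //.
        rewrite (mg_class hz); congr (_ * (_ / (_ * _))).
        apply: mg_class; apply: (@sim_sub I X); first exact: subsetIl.
        apply: sim_trans _ (sim_sym hu); apply: (@sim_sub X U) hz; exact: subsetUl.
      rewrite ler_wpM2l ?mulr_ge0 ?P0 //.
      rewrite -big_distrl /= -/(mg U z0) invfM mulrA.
      rewrite -[X in _ <= X]mul1r ler_wpM2r ?invr_ge0 ?mg_ge0 //.
      have [->|nz] := eqVneq (mg U z0) 0; first by rewrite mul0r.
      by rewrite mulfV.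
    rewrite big1; last by move=> z _; rewrite hn.
    by case: ifP => // _; rewrite !(mulr_ge0, invr_ge0, P0, mg_ge0).
  rewrite -P1; apply: ler_sum => u _.
  rewrite (eq_bigr (fun v => P u / mg I u * (if sim I v u then P v else 0))); last first.
    by move=> v _; case: ifP; rewrite ?mulr0 // mulrAC.
  rewrite -big_distrr /= -big_mkcond /= -/(mg I u).
  have [->|nz] := eqVneq (mg I u) 0; first by rewrite mulr0 P0.
  by rewrite divfK.
have eH S : entropy P S = - \sum_z P z * ln (mg S z) by [].
rewrite !eH.
rewrite -subr_ge0.
have -> : - \sum_z P z * ln (mg X z) + - \sum_z P z * ln (mg Y z) -
   (- \sum_z P z * ln (mg U z) + - \sum_z P z * ln (mg I z))
   = - \sum_z P z * (ln (mg X z) + ln (mg Y z) - ln (mg U z) - ln (mg I z)).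
  have e : \sum_z P z * (ln (mg X z) + ln (mg Y z) - ln (mg U z) - ln (mg I z))
     = \sum_z P z * ln (mg X z) + \sum_z P z * ln (mg Y z) - \sum_z P z * ln (mg U z)
       - \sum_z P z * ln (mg I z).
    rewrite (eq_bigr (fun z => P z * ln (mg X z) + P z * ln (mg Y z) - P z * ln (mg U z) - P z * ln (mg I z))); last by move=> z _; rewrite !mulrDr !mulrN.
    by rewrite !sumrB big_split.
  rewrite e; lra.
rewrite oppr_ge0.
apply: (le_trans (ler_sum _ (fun z _ => step1 z))).
by rewrite sumrB P1 subr_le0.
Qed.
End Ent.
Section Comb.
Variables (R : realType) (V : finType) (H : {set V} -> R) (a : R).
Variable (Pst : {set {set V}}).
Hypothesis Hsub : forall X Y : {set V}, H (X :|: Y) + H (X :&: Y) <= H X + H Y.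
Hypothesis VT : [set: V] != set0.
Variable r0 : V -> R.
Hypothesis cr0 : core H a r0.
Hypothesis Pfund : fundamental_partition H a Pst.

Local Notation f := (falpha H a).

Lemma fE (X : {set V}) : X != set0 -> f X = a - H setT + H X.
Proof. by move=> Xn0; rewrite /falpha (negbTE Xn0) /condH setUC setUCr; lra. Qed.

Lemma fT : f setT = a.
Proof. by rewrite fE //; lra. Qed.

Lemma rsum_split (r : V -> R) (X : {set V}) : rsum r setT = rsum r X + rsum r (~:X).
Proof. by rewrite /rsum (big_setID X) setTI setTD. Qed.

Lemma rsum_UI (r : V -> R) (X Y : {set V}) :
  rsum r (X :|: Y) + rsum r (X :&: Y) = rsum r X + rsum r Y.
Proof.
have e1 : \sum_(i in X :|: Y) r i = \sum_(i in X) r i + \sum_(i in Y :\: X) r i.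
  by rewrite (@big_setID _ _ _ _ (X :|: Y) X) setUK setDUl setDv set0U.
have e2 : \sum_(i in Y) r i = \sum_(i in X :&: Y) r i + \sum_(i in Y :\: X) r i.
  by rewrite (@big_setID _ _ _ _ Y X) setIC.
rewrite /rsum e1 e2; lra.
Qed.

Lemma rsum_cover (r : V -> R) (Q : {set {set V}}) :
  trivIset Q -> rsum r (cover Q) = \sum_(C in Q) rsum r C.
Proof. by move=> tQ; rewrite /rsum big_trivIset. Qed.

Lemma rsum0 (r : V -> R) : rsum r set0 = 0.
Proof. by rewrite /rsum big_set0. Qed.

Lemma core_le (r : V -> R) : core H a r -> forall Z, Z != set0 -> rsum r Z <= f Z.
Proof.
move=> [ach rT] Z Zn0; have [->|ZT] := eqVneq Z setT; first by rewrite fT rT.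
have nCZ : ~: Z != setT.
  by apply/eqP => h; move: Zn0; rewrite -[Z]setCK h setCT eqxx.
have := ach (~: Z); rewrite properT nCZ setCK /condH setUC setUCr => /(_ isT) h.
rewrite fE //; have := rsum_split r Z; rewrite rT; lra.
Qed.

Lemma le_fhat (r : V -> R) (X : {set V}) :
  (forall Z, Z != set0 -> Z \subset X -> rsum r Z <= f Z) -> rsum r X <= fhat H a X.
Proof.
move=> h; rewrite /fhat; elim/big_rec: _ => [|Q x pQ hx].
  have [->|Xn0] := eqVneq X set0; first by rewrite rsum0 /falpha eqxx.
  exact: h.
rewrite le_min hx andbT.
move: pQ => /and3P[/eqP cov tI s0].
rewrite -cov rsum_cover //; apply: ler_sum => C CQ; apply: h.
  by apply/eqP => C0; rewrite -C0 CQ in s0.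
by rewrite -cov; exact: bigcup_sup.
Qed.

Lemma fhat_le (X : {set V}) : fhat H a X <= f X.
Proof. by rewrite /fhat; elim/big_rec: _ => // Q x _ hx; rewrite ge_min hx orbT. Qed.

Lemma eqsum (F G : {set V} -> R) :
  (forall C, C \in Pst -> F C <= G C) -> \sum_(C in Pst) F C = \sum_(C in Pst) G C ->
  forall C, C \in Pst -> F C = G C.
Proof.
move=> hle heq C CP.
have h0 : \sum_(C in Pst) (G C - F C) = 0 by rewrite sumrB heq subrr.
have h1 : forall C, C \in Pst -> 0 <= G C - F C by move=> D DP; rewrite subr_ge0 hle.
have := psumr_eq0P h1 h0 CP.
by move/eqP; rewrite subr_eq0 => /eqP.
Qed.


Lemma Pparts : [/\ cover Pst = setT, trivIset Pst & set0 \notin Pst].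
Proof. by case: Pfund => /and3P[/eqP -> -> ->]. Qed.

Lemma fhatT : fhat H a setT = a.
Proof.
apply/eqP; rewrite eq_le; apply/andP; split; first by rewrite -{2}fT fhat_le.
have [_ rT] := cr0; rewrite -{1}rT; apply: le_fhat => Z Zn0 _; exact: core_le.
Qed.

Lemma sumf : \sum_(C in Pst) f C = a.
Proof. by case: Pfund => _ -> _; exact: fhatT. Qed.

Lemma blk_n0 C : C \in Pst -> C != set0.
Proof. by case: Pparts => _ _ s0 CP; apply/eqP => C0; rewrite -C0 CP in s0. Qed.

Lemma r0C C : C \in Pst -> rsum r0 C = f C.
Proof.
apply: eqsum => [D DP|]; first by apply: core_le => //; exact: blk_n0.
case: Pparts => cov tI _; rewrite sumf -rsum_cover // cov; by case: cr0.
Qed.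

Lemma fhatC C : C \in Pst -> fhat H a C = f C.
Proof.
move=> CP; apply/eqP; rewrite eq_le fhat_le -{1}(r0C CP) /=.
by apply: le_fhat => Z Zn0 _; exact: core_le.
Qed.

Lemma core_sub (r : V -> R) : core H a r -> forall C, C \in Pst -> subcore H a C r.
Proof.
move=> cr C CP; split.
  move=> X _; apply: le_fhat => Z Zn0 _; exact: core_le.
rewrite fhatC //; move: C CP; apply: eqsum => [D DP|].
  by apply: core_le => //; exact: blk_n0.
case: Pparts => cov tI _; rewrite sumf -rsum_cover // cov; by case: cr.
Qed.

Definition part (Y : {set V}) :=
  [set C in Pst | (C :&: Y != set0) && ~~ (C \subset Y)].

Lemma fsub (X Y : {set V}) : X :&: Y != set0 ->
  f (X :|: Y) + f (X :&: Y) <= f X + f Y.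
Proof.
move=> h.
have nX : X != set0 by apply: contraNneq h => ->; rewrite set0I.
have nY : Y != set0 by apply: contraNneq h => ->; rewrite setI0.
have nU : X :|: Y != set0 by rewrite setU_eq0 negb_and nX.
rewrite !fE //; have := Hsub X Y; lra.
Qed.

Lemma sub_core (r : V -> R) : (forall C, C \in Pst -> subcore H a C r) -> core H a r.
Proof.
move=> hs.
case: Pparts => cov tI s0.
have h1 C Z : C \in Pst -> Z != set0 -> Z \subset C -> rsum r Z <= f Z.
  move=> CP Zn0 ZC; apply: le_trans (fhat_le Z); exact: (hs C CP).1.
have h2 C : C \in Pst -> rsum r C = f C.
  by move=> CP; rewrite (hs C CP).2 fhatC.
have rT : rsum r setT = a.
  rewrite -cov rsum_cover // -sumf; apply: eq_bigr => C CP; exact: h2.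
have h3 (J : {set {set V}}) : J \subset Pst -> cover J != set0 ->
    rsum r (cover J) <= f (cover J).
  move=> JP Jn0; have tJ := trivIsetS JP tI.
  rewrite rsum_cover // (eq_bigr (fun C => rsum r0 C)); last first.
    by move=> C CJ; have CP := subsetP JP C CJ; rewrite h2 // r0C.
  rewrite -rsum_cover //; exact: core_le.
have main n : forall Y, Y != set0 -> (#|part Y| <= n)%N -> rsum r Y <= f Y.
  elim: n => [|n IH] Y Yn0 hc.
    have p0 : part Y = set0 by apply: cards0_eq; apply/eqP; rewrite -leqn0.
    pose J := [set C in Pst | C :&: Y != set0].
    have eY : Y = cover J.
      apply/setP => x; apply/idP/idP => [xY|].
        have : x \in cover Pst by rewrite cov inE.
        case/bigcupP => C CP xC; apply/bigcupP; exists C => //.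
        by rewrite inE CP /=; apply/set0Pn; exists x; rewrite inE xC.
      case/bigcupP => C; rewrite inE => /andP[CP CY] xC.
      have : C \notin part Y by rewrite p0 inE.
      rewrite inE CP CY /= negbK => /subsetP; exact.
    rewrite eY in Yn0 *.
    apply: h3 Yn0; by apply/subsetP => C; rewrite inE => /andP[].
  case: (leqP #|part Y| n) => [hn|hn]; first exact: IH.
  have : part Y != set0 by rewrite -card_gt0 (leq_trans _ hn).
  case/set0Pn => C Cin; move: (Cin); rewrite inE => /and3P[CP CYn0 CnY].
  have Yn0' : Y :|: C != set0 by rewrite setU_eq0 negb_and Yn0.
  have hY' : (#|part (Y :|: C)| <= n)%N.
    have sub: part (Y :|: C) \subset part Y :\ C.
      apply/subsetP => D; rewrite !inE => /and3P[DP DYC DnYC].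
      have DC : D != C by apply: contraNneq DnYC => ->; exact: subsetUr.
      have DC0 : D :&: C = set0.
        by apply/eqP; rewrite setI_eq0; move/trivIsetP: tI; apply.
      rewrite setIUr DC0 setU0 in DYC.
      rewrite DC DP DYC /=; apply: contra DnYC => DY.
      exact: subset_trans DY (subsetUl _ _).
    apply: leq_trans (subset_leq_card sub) _.
    by move: hc; rewrite (cardsD1 C) Cin.
  have IHY := IH _ Yn0' hY'.
  have := fsub (X:=Y) (Y:=C); rewrite setIC => /(_ CYn0).
  have := rsum_UI r Y C.
  have := h1 C (Y :&: C) CP; rewrite setIC => /(_ CYn0 (subsetIl _ _)).
  have := h2 C CP.
  lra.
split; last exact: rT.
move=> X; rewrite properT => XT.
have [->|Xn0] := eqVneq X set0.
  by rewrite rsum0 /condH setC0 set0U subrr.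
have nCX : ~: X != set0.
  by apply/eqP => h; move: XT; rewrite -[X]setCK h setC0 eqxx.
have := main _ _ nCX (leqnn _); rewrite fE // /condH setUCr.
have := rsum_split r X; rewrite rT; lra.
Qed.

End Comb.

Section Min.
Variables (R : realType) (V : finType) (Pst : {set {set V}}) (w : V -> R).
Hypothesis cov : cover Pst = setT.
Hypothesis tI : trivIset Pst.
Variables (feasV : (V -> R) -> Prop) (feasC : {set V} -> (V -> R) -> Prop).
Hypothesis hdec : forall r, feasV r <-> forall C, C \in Pst -> feasC C r.
Hypothesis hloc : forall C (r r' : V -> R), C \in Pst ->
  (forall i, i \in C -> r i = r' i) -> feasC C r -> feasC C r'.

Lemma wnorm_loc (C : {set V}) (r r' : V -> R) :
  (forall i, i \in C -> r i = r' i) -> wnorm w C r = wnorm w C r'.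
Proof. by move=> h; apply: eq_bigr => i iC; rewrite h. Qed.

Lemma wnorm_dec (r : V -> R) : wnorm w setT r = \sum_(C in Pst) wnorm w C r.
Proof. by rewrite /wnorm -cov big_trivIset. Qed.

Lemma min_dec (r : V -> R) :
  is_minimizer feasV (wnorm w setT) r <->
  (forall C, C \in Pst -> is_minimizer (feasC C) (wnorm w C) r).
Proof.
split.
  move=> [fr hmin] C CP; split; first exact: (hdec r).1 fr C CP.
  move=> r' fr'.
  pose r2 i := if i \in C then r' i else r i.
  have out D i : D \in Pst -> D != C -> i \in D -> r2 i = r i.
    move=> DP DC iD; rewrite /r2.
    have dis : [disjoint D & C] by move/trivIsetP: tI; apply.
    by rewrite (disjointFr dis iD).
  have fr2 : feasV r2.
    apply/hdec => D DP; have [->|DC] := eqVneq D C.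
      by apply: hloc fr' => // i iC; rewrite /r2 iC.
    apply: hloc ((hdec r).1 fr D DP) => // i iD; by rewrite (out D i).
  have := hmin _ fr2; rewrite !wnorm_dec (bigD1 C CP) [X in _ <= X](bigD1 C CP) /=.
  have -> : \sum_(D in Pst | D != C) wnorm w D r2 = \sum_(D in Pst | D != C) wnorm w D r.
    apply: eq_bigr => D /andP[DP DC]; apply: wnorm_loc => i iD; by rewrite (out D i).
  have -> : wnorm w C r2 = wnorm w C r'.
    by apply: wnorm_loc => i iC; rewrite /r2 iC.
  by rewrite lerD2r.
move=> h; split; first by apply/hdec => C CP; case: (h C CP).
move=> r' fr'; rewrite !wnorm_dec; apply: ler_sum => C CP.
by apply: (h C CP).2; exact: (hdec r').1 fr' C CP.
Qed.
End Min.


Lemma subcore_loc (R : realType) (V : finType) (H : {set V} -> R) (a : R)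
   (C : {set V}) (r r' : V -> R) :
  (forall i, i \in C -> r i = r' i) -> subcore H a C r -> subcore H a C r'.
Proof.
move=> h.
have e (X : {set V}) : X \subset C -> rsum r X = rsum r' X.
  by move/subsetP=> XC; apply: eq_bigr => i /XC /h.
move=> [h1 h2]; split; last by rewrite -e.
by move=> X XC; rewrite -e // h1.
Qed.

Unset Implicit Arguments.
Theorem theorem3 (R : realType) (V : finType) (A : V -> finType)
    (P : {dffun forall i : V, A i} -> R) (RCO : R) (Pst : {set {set V}})
    (w : V -> R) :
  (1 < #|V|)%N ->
  is_pmf P ->
  is_RCO (entropy P) RCO ->
  fundamental_partition (entropy P) RCO Pst ->
  (2 <= #|Pst|)%N ->
  (forall i, 0 < w i) ->
  (* (a) egalitarian solution *)
  (forall r : V -> R,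
     is_minimizer (core (entropy P) RCO) (wnorm w [set: V]) r <->
     (forall C, C \in Pst ->
        is_minimizer (subcore (entropy P) RCO C) (wnorm w C) r)) /\
  (* (b) fractional egalitarian solution, K = |Pst| - 1 *)
  (forall r : V -> R,
     is_minimizer (fun r' => core (entropy P) RCO r' /\
                             forall i, inQK (#|Pst| - 1) (r' i))
                  (wnorm w [set: V]) r <->
     (forall C, C \in Pst ->
        is_minimizer (fun r' => subcore (entropy P) RCO C r' /\
                                forall i, i \in C -> inQK (#|Pst| - 1) (r' i))
                     (wnorm w C) r)).
Proof.
move=> hV [P0 P1] hRCO hfund _ _.
have Hsub := entropy_submod P0 P1.
have VT : [set: V] != set0 by rewrite -card_gt0 cardsT (ltn_trans _ hV).
case: hRCO => [[r0 [ach0 rT0]] _].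
have cr0 : core (entropy P) RCO r0 by [].
have [cov tI _] := Pparts hfund.
have dec r : core (entropy P) RCO r <->
    (forall C, C \in Pst -> subcore (entropy P) RCO C r).
  split; first by move=> cr; exact: (core_sub VT cr0 hfund cr).
  by move=> hs; exact: (sub_core Hsub VT cr0 hfund hs).
split => r; apply: min_dec => //.
- by move=> C r1 r2 _ h; apply: subcore_loc.
- move=> r1; split.
    by move=> [/dec h hq] C CP; split; [exact: h | move=> i _; exact: hq].
  move=> h; split; first by apply/dec => C CP; case: (h C CP).
  move=> i; have : i \in cover Pst by rewrite cov inE.
  by case/bigcupP => C CP iC; case: (h C CP) => _; apply.
- move=> C r1 r2 _ h [s q]; split; first exact: subcore_loc h s.
  by move=> i iC; rewrite -h //; exact: q.
Qed.
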